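(* Let $\mathbb{F}_2=\pi_1(\mathbb{C}\setminus\{-1,1\},0)$ be the free group on generators $a_1,a_2$. For $Y>0$ let $N^{\mathcal{L}_-}_{\mathcal{PB}_3}(Y)$ be the number of reduced words $w\in\mathbb{F}_2$, $w\neq \mathrm{Id}$, with $\mathcal{L}_-(w)\le Y$. Then for every $Y>0$, $$N^{\mathcal{L}_-}_{\mathcal{PB}_3}(Y)\le \tfrac12 e^{3Y}.$$
   Context: Write a reduced word $w\in\mathbb{F}_2$ as $w=a_{j_1}^{k_1}a_{j_2}^{k_2}\cdots$ with consecutive $j_i$ different and $k_i\neq0$; the factors $a_{j_i}^{k_i}$ are the terms of $w$. The syllables of $w$ are: each term with $|k_i|\ge2$ (syllable of first type), and each maximal sequence of consecutive terms with $|k_i|=1$ all having the same sign of exponent (syllable of second type). This gives a unique decomposition of $w$ into syllables. The degree of a syllable is the sum of the absolute values of the exponents of its terms. For $w\ne\mathrm{Id}$, $\mathcal{L}_-(w)=\sum_k\log(3d_k)$, where the sum runs over the degrees $d_k$ of all syllables of $w$. *)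

(* Defs.v *)
From Stdlib Require Import Reals ZArith List Bool.
Import ListNotations.
Open Scope R_scope.

(* A term a_j^k of a reduced word in F_2 = <a_1, a_2>: the generator index
   is encoded by a bool (true = a_1, false = a_2) and k : Z is the exponent. *)
Definition term := (bool * Z)%type.

Fixpoint alternating (w : list term) : Prop :=
  match w with
  | t1 :: ((t2 :: _) as w') => fst t1 <> fst t2 /\ alternating w'
  | _ => True
  end.

(* A reduced word, written as its list of terms a_{j_1}^{k_1} a_{j_2}^{k_2} ...
   (this is a bijection with F_2; the identity is the empty list). *)
Definition reduced_word (w : list term) : Prop :=
  Forall (fun t => snd t <> 0%Z) w /\ alternating w.

(* Decomposition into syllables: each term with |k| >= 2 is a syllable
   (first type); maximal runs of consecutive terms with |k| = 1 and the same
   sign of exponent form a syllable (second type). *)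
Fixpoint syllables (w : list term) : list (list term) :=
  match w with
  | [] => []
  | t :: w' =>
      let ss := syllables w' in
      if (2 <=? Z.abs (snd t))%Z then [t] :: ss
      else match ss with
           | (t' :: r) :: ss' =>
               if (Z.abs (snd t') =? 1)%Z && (Z.sgn (snd t') =? Z.sgn (snd t))%Z
               then (t :: t' :: r) :: ss'
               else [t] :: ss
           | _ => [t] :: ss
           end
  end.

Definition syl_degree (s : list term) : Z :=
  fold_right (fun t acc => (Z.abs (snd t) + acc)%Z) 0%Z s.

Definition L_minus (w : list term) : R :=
  fold_right (fun s acc => ln (3 * IZR (syl_degree s)) + acc) 0 (syllables w).

(* Main.v *)
Require Import Defs.
From Stdlib Require Import Reals ZArith List Lia Lra Psatz Bool FinFun.
Import ListNotations.
Open Scope R_scope.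

Definition sumR {A} (f : A -> R) (l : list A) : R :=
  fold_right (fun x acc => f x + acc) 0 l.

Lemma sumR_app {A} (f : A -> R) l1 l2 : sumR f (l1 ++ l2) = sumR f l1 + sumR f l2.
Proof. induction l1; simpl; [lra| rewrite IHl1; lra]. Qed.

Lemma sumR_nonneg {A} (f : A -> R) l : (forall x, 0 <= f x) -> 0 <= sumR f l.
Proof. intros Hf; induction l; simpl; [lra| specialize (Hf a); lra]. Qed.

Lemma sumR_nodup_incl {A} (f : A -> R) (l l' : list A) :
  (forall x, 0 <= f x) -> NoDup l -> incl l l' -> sumR f l <= sumR f l'.
Proof.
  intros Hf. revert l'. induction l as [|a l IH]; intros l' Hnd Hinc; simpl.
  - apply sumR_nonneg; auto.
  - inversion Hnd as [|? ? Hna Hnd']; subst.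
    assert (Ha : In a l') by (apply Hinc; left; reflexivity).
    destruct (in_split _ _ Ha) as [l1 [l2 ->]].
    rewrite sumR_app; simpl.
    assert (H : sumR f l <= sumR f (l1 ++ l2)).
    { apply IH; auto. intros x Hx.
      assert (Hx' : In x (l1 ++ a :: l2)) by (apply Hinc; right; exact Hx).
      apply in_app_or in Hx'. apply in_or_app.
      destruct Hx' as [H|[H|H]]; auto. subst; contradiction. }
    rewrite sumR_app in H. lra.
Qed.

Lemma sumR_flat_map {A B} (f : B -> R) (g : A -> list B) l :
  sumR f (flat_map g l) = sumR (fun x => sumR f (g x)) l.
Proof. induction l; simpl; [lra|]. rewrite sumR_app, IHl; lra. Qed.

Lemma sumR_map {A B} (f : B -> R) (g : A -> B) l :
  sumR f (map g l) = sumR (fun x => f (g x)) l.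
Proof. induction l; simpl; [lra|]. rewrite IHl; lra. Qed.

Lemma sumR_mulr {A} (f : A -> R) c l :
  sumR (fun x => f x * c) l = sumR f l * c.
Proof. induction l; simpl; [lra|]. rewrite IHl; lra. Qed.

Lemma sumR_lower {A} (f : A -> R) c l :
  (forall x, In x l -> c <= f x) -> INR (length l) * c <= sumR f l.
Proof.
  induction l as [|a l IH]; intros H; [simpl; lra|].
  replace (INR (length (a :: l))) with (INR (length l) + 1) by (rewrite <- S_INR; reflexivity).
  simpl. assert (H1 := H a (or_introl eq_refl)).
  assert (H2 : INR (length l) * c <= sumR f l) by (apply IH; intros; apply H; right; auto).
  lra.
Qed.

Fixpoint run (g : bool) (e : Z) (d : nat) : list term :=
  match d with O => [] | S d' => (g, e) :: run (negb g) e d' end.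

Definition shape (s : list term) : Prop :=
  (exists g k, s = [(g,k)] /\ (2 <= Z.abs k)%Z) \/
  (exists g e d, s = run g e (S d) /\ (e = 1%Z \/ e = (-1)%Z)).

Lemma concat_syllables w : concat (syllables w) = w.
Proof.
  induction w as [|t w IH]; simpl; auto.
  destruct (2 <=? Z.abs (snd t))%Z; simpl; [now rewrite IH|].
  destruct (syllables w) as [|[|t' r] ss'] eqn:E; simpl in *; try now rewrite IH.
  destruct ((Z.abs (snd t') =? 1)%Z && (Z.sgn (snd t') =? Z.sgn (snd t))%Z); simpl; now rewrite IH.
Qed.

Lemma length_syllables w : (length (syllables w) <= length w)%nat.
Proof.
  induction w as [|t w IH]; simpl; auto.
  destruct (2 <=? Z.abs (snd t))%Z; simpl; [lia|].
  destruct (syllables w) as [|[|t' r] ss'] eqn:E; simpl in *; try lia.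
  destruct ((Z.abs (snd t') =? 1)%Z && (Z.sgn (snd t') =? Z.sgn (snd t))%Z); simpl; lia.
Qed.

Lemma alt_tail t w : alternating (t :: w) -> alternating w.
Proof. destruct w; simpl; tauto. Qed.

Lemma syllables_shape w : Forall (fun t => snd t <> 0%Z) w -> alternating w ->
  forall s, In s (syllables w) -> shape s.
Proof.
  induction w as [|t w IH]; intros Hnz Halt s Hs; [simpl in Hs; contradiction|].
  inversion Hnz as [|? ? Ht Hnz']; subst.
  pose proof (alt_tail _ _ Halt) as Halt'.
  specialize (IH Hnz' Halt').
  assert (Hw := concat_syllables w).
  destruct t as [g k]; cbn [syllables snd] in Hs; cbn [snd] in Ht.
  destruct (2 <=? Z.abs k)%Z eqn:Ek.
  - destruct Hs as [<-|Hs]; auto. left. exists g, k. split; auto. apply Z.leb_le; auto.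
  - assert (Hk : k = 1%Z \/ k = (-1)%Z) by (apply Z.leb_gt in Ek; lia).
    destruct (syllables w) as [|[|t' r] ss'] eqn:E.
    + destruct Hs as [<-|[]]. right. exists g, k, O. split; [reflexivity|exact Hk].
    + destruct Hs as [<-|Hs]; [right; exists g, k, O; split; [reflexivity|exact Hk] | apply IH; auto].
    + destruct ((Z.abs (snd t') =? 1)%Z && (Z.sgn (snd t') =? Z.sgn k)%Z) eqn:C.
      * destruct Hs as [<-|Hs]; [| apply IH; right; auto].
        apply andb_true_iff in C; destruct C as [C1 C2].
        apply Z.eqb_eq in C1; apply Z.eqb_eq in C2.
        destruct (IH (t'::r) (or_introl eq_refl)) as [[g' [k' [Hs' Hk']]]|[g' [e [d [Hs' He]]]]].
        -- injection Hs' as Ht' _. subst t'. simpl in C1. lia.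
        -- simpl in Hs'. injection Hs' as Ht' Hr. subst t' r. simpl in C2.
           rewrite <- Hw in Halt. simpl in Halt. destruct Halt as [Hg _].
           assert (e = k) by (destruct He, Hk; subst; simpl in C2; congruence). subst e.
           right. exists g, k, (S d). split; [|exact Hk].
           simpl. replace g' with (negb g) by (destruct g, g'; simpl in *; congruence).
           rewrite negb_involutive. reflexivity.
      * destruct Hs as [<-|Hs]; [right; exists g, k, O; split; [reflexivity|exact Hk] | apply IH; auto].
Qed.

Lemma syl_degree_app a b : syl_degree (a ++ b) = (syl_degree a + syl_degree b)%Z.
Proof. induction a; simpl; [lia|]. unfold syl_degree in *; simpl. rewrite IHa; lia. Qed.

Lemma syl_degree_nonneg s : (0 <= syl_degree s)%Z.
Proof. induction s; unfold syl_degree in *; simpl; lia. Qed.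

Lemma syl_degree_in_concat ss s : In s ss -> (syl_degree s <= syl_degree (concat ss))%Z.
Proof.
  induction ss as [|a ss IH]; simpl; [tauto|].
  rewrite syl_degree_app. intros [<-|H].
  - pose proof (syl_degree_nonneg (concat ss)); lia.
  - pose proof (syl_degree_nonneg a); specialize (IH H); lia.
Qed.

Lemma syl_degree_run g e d : (e = 1 \/ e = -1)%Z -> syl_degree (run g e d) = Z.of_nat d.
Proof.
  intros He. revert g; induction d; intros g; [reflexivity|].
  cbn [run]. unfold syl_degree in *; cbn [fold_right snd]. rewrite IHd. destruct He; subst; lia.
Qed.

Lemma length_le_degree w : Forall (fun t => snd t <> 0%Z) w ->
  (Z.of_nat (length w) <= syl_degree w)%Z.
Proof.
  induction 1; unfold syl_degree in *; simpl; lia.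
Qed.

Lemma shape_deg_pos s : shape s -> (0 < syl_degree s)%Z.
Proof.
  intros [[g [k [-> Hk]]]|[g [e [d [-> He]]]]].
  - unfold syl_degree; simpl; lia.
  - rewrite syl_degree_run by auto. lia.
Qed.

Definition wt (s : list term) : R := / (3 * IZR (syl_degree s)) ^ 3.
Definition phi (ss : list (list term)) : R := fold_right (fun s acc => wt s * acc) 1 ss.

Lemma inv_nonneg x : 0 <= x -> 0 <= / x.
Proof.
  intros H. destruct (Req_dec x 0) as [->|Hn]; [rewrite Rinv_0; lra|].
  apply Rlt_le, Rinv_0_lt_compat; lra.
Qed.

Lemma wt_nonneg s : 0 <= wt s.
Proof.
  unfold wt. apply inv_nonneg. apply pow_le.
  pose proof (syl_degree_nonneg s) as H. apply IZR_le in H. lra.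
Qed.

Lemma phi_nonneg ss : 0 <= phi ss.
Proof.
  induction ss; simpl; [lra|]. pose proof (wt_nonneg a). nra.
Qed.

Lemma phi_exp ss : (forall s, In s ss -> (0 < syl_degree s)%Z) ->
  phi ss = exp (-3 * fold_right (fun s acc => ln (3 * IZR (syl_degree s)) + acc) 0 ss).
Proof.
  induction ss as [|s ss IH]; intros H; simpl.
  - rewrite Rmult_0_r, exp_0; reflexivity.
  - rewrite IH by (intros; apply H; right; auto).
    assert (Hs := H s (or_introl eq_refl)). apply IZR_lt in Hs.
    set (x := 3 * IZR (syl_degree s)). assert (Hx : 0 < x) by (unfold x; lra).
    set (A := fold_right _ 0 ss).
    replace (-3 * (ln x + A)) with (- (ln x + ln x + ln x) + -3 * A) by ring.
    rewrite exp_plus, exp_Ropp, !exp_plus, exp_ln by exact Hx.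
    unfold wt. fold x. f_equal. f_equal. simpl. ring.
Qed.

Definition new_syl (d : nat) : list (list term) :=
  [run true 1 d; run false 1 d; run true (-1) d; run false (-1) d] ++
  (if (2 <=? d)%nat then [[(true, Z.of_nat d)]; [(false, Z.of_nat d)];
       [(true, (- Z.of_nat d)%Z)]; [(false, (- Z.of_nat d)%Z)]] else []).

Fixpoint SylM (M : nat) : list (list term) :=
  match M with O => [] | S m => SylM m ++ new_syl (S m) end.

Lemma In_SylM M d s : (1 <= d <= M)%nat -> In s (new_syl d) -> In s (SylM M).
Proof.
  induction M; intros Hd Hs; [lia|].
  simpl. apply in_or_app.
  destruct (Nat.eq_dec d (S M)) as [->|Hne]; [right; exact Hs|].
  left. apply IHM; auto; lia.
Qed.

Lemma wt_of s d : syl_degree s = Z.of_nat d -> wt s = / (3 * INR d) ^ 3.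
Proof. intros H. unfold wt. rewrite H, <- INR_IZR_INZ. reflexivity. Qed.

Lemma sum_new d : (1 <= d)%nat ->
  sumR wt (new_syl d) = (if (2 <=? d)%nat then 8 else 4) * / (3 * INR d) ^ 3.
Proof.
  intros Hd. unfold new_syl. rewrite sumR_app.
  assert (Hr : forall g e, (e = 1 \/ e = -1)%Z -> wt (run g e d) = / (3 * INR d) ^ 3)
    by (intros; apply wt_of, syl_degree_run; auto).
  unfold sumR at 1; simpl fold_right.
  rewrite !Hr by auto.
  destruct (2 <=? d)%nat.
  - assert (Hs : forall g k, Z.abs k = Z.of_nat d -> wt [(g, k)] = / (3 * INR d) ^ 3)
      by (intros g k Hk; apply wt_of; unfold syl_degree; simpl; lia).
    unfold sumR; cbn [fold_right]. rewrite !Hs by lia. set (X := / (3 * INR d) ^ 3). lra.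
  - unfold sumR; cbn [fold_right]. set (X := / (3 * INR d) ^ 3). lra.
Qed.

Lemma key_ineq a : 0 < a -> 8 * / (3 * (a + 1)) ^ 3 <= 4 / (27 * a ^ 2) - 4 / (27 * (a + 1) ^ 2).
Proof.
  intros Ha.
  assert (H : 4 / (27 * a ^ 2) - 4 / (27 * (a + 1) ^ 2) - 8 * / (3 * (a + 1)) ^ 3
              = 4 * (3 * a + 1) / (27 * a ^ 2 * (a + 1) ^ 3)).
  { field. lra. }
  assert (0 <= 4 * (3 * a + 1) / (27 * a ^ 2 * (a + 1) ^ 3)).
  { unfold Rdiv. apply Rmult_le_pos; [lra|]. apply Rlt_le, Rinv_0_lt_compat.
    apply Rmult_lt_0_compat; [apply Rmult_lt_0_compat; [lra|apply pow_lt; lra]|apply pow_lt; lra]. }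
  lra.
Qed.

Lemma SylM_bound M : sumR wt (SylM (S M)) <= 8/27 - 4 / (27 * (INR M + 1) ^ 2).
Proof.
  induction M.
  - change (SylM 1) with ([] ++ new_syl 1). rewrite sumR_app, sum_new by lia. simpl. lra.
  - change (SylM (S (S M))) with (SylM (S M) ++ new_syl (S (S M))).
    rewrite sumR_app, sum_new by lia.
    replace ((2 <=? S (S M))%nat) with true by (symmetry; apply Nat.leb_le; lia).
    rewrite !S_INR.
    pose proof (key_ineq (INR M + 1) ltac:(pose proof (pos_INR M); lra)).
    replace (INR M + 1 + 1) with ((INR M + 1) + 1) by ring. lra.
Qed.

Lemma SylM_le M : sumR wt (SylM M) <= 8/27.
Proof.
  destruct M; [simpl; lra|]. pose proof (SylM_bound M).
  assert (0 <= 4 / (27 * (INR M + 1) ^ 2)).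
  { unfold Rdiv. apply Rmult_le_pos; [lra|]. apply inv_nonneg. pose proof (pos_INR M).
    apply Rmult_le_pos; [lra|]. apply pow_le; lra. }
  lra.
Qed.

Fixpoint En (Syl : list (list term)) (n : nat) : list (list (list term)) :=
  match n with
  | O => [[]]
  | S m => [] :: flat_map (fun s => map (cons s) (En Syl m)) Syl
  end.
Definition Gn Syl n := flat_map (fun s => map (cons s) (En Syl n)) Syl.

Lemma sum_fm (L : list (list term)) F :
  sumR phi (flat_map (fun s => map (cons s) F) L) = sumR wt L * sumR phi F.
Proof.
  induction L as [|s L IH]; simpl; [lra|].
  rewrite sumR_app, IH, sumR_map. simpl.
  replace (sumR (fun x => wt s * phi x) F) with (sumR phi F * wt s).
  - lra.
  - rewrite <- sumR_mulr. clear IH. induction F as [|x F IHF]; [reflexivity|]. unfold sumR in *; cbn [fold_right]. rewrite IHF. ring.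
Qed.

Lemma sum_En Syl n : sumR wt Syl <= 8/27 -> sumR phi (En Syl n) <= 3/2.
Proof.
  intros H. pose proof (sumR_nonneg wt Syl wt_nonneg).
  induction n; simpl; [lra|].
  rewrite sum_fm. pose proof (sumR_nonneg phi (En Syl n) phi_nonneg). nra.
Qed.

Lemma sum_Gn Syl n : sumR wt Syl <= 8/27 -> sumR phi (Gn Syl n) <= 1/2.
Proof.
  intros H. unfold Gn. rewrite sum_fm. pose proof (sum_En Syl n H).
  pose proof (sumR_nonneg wt Syl wt_nonneg).
  pose proof (sumR_nonneg phi (En Syl n) phi_nonneg). nra.
Qed.

Lemma In_En Syl n ss : (forall s, In s ss -> In s Syl) -> (length ss <= n)%nat -> In ss (En Syl n).
Proof.
  revert ss; induction n; intros ss Hs Hl.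
  - destruct ss; simpl in *; [auto|lia].
  - destruct ss as [|s ss]; [left; reflexivity|]. right.
    apply in_flat_map. exists s. split; [apply Hs; left; auto|].
    apply in_map. apply IHn; [intros; apply Hs; right; auto| simpl in Hl; lia].
Qed.

Lemma In_Gn Syl n s ss : (forall x, In x (s :: ss) -> In x Syl) -> (length ss <= n)%nat ->
  In (s :: ss) (Gn Syl n).
Proof.
  intros Hs Hl. unfold Gn. apply in_flat_map. exists s. split; [apply Hs; left; auto|].
  apply in_map. apply In_En; auto. intros; apply Hs; right; auto.
Qed.

Lemma syllables_inj : Injective syllables.
Proof. intros x y H. rewrite <- (concat_syllables x), <- (concat_syllables y), H. reflexivity. Qed.

Definition Nb (ws : list (list term)) : nat :=
  fold_right (fun w acc => (Z.to_nat (syl_degree w) + acc)%nat) 0%nat ws.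

Lemma Nb_ge ws w : In w ws -> (Z.to_nat (syl_degree w) <= Nb ws)%nat.
Proof. induction ws; simpl; [tauto|]. intros [->|H]; [lia|]. specialize (IHws H); lia. Qed.

Lemma syl_in_SylM w N : Forall (fun t => snd t <> 0%Z) w -> alternating w ->
  (Z.to_nat (syl_degree w) <= N)%nat ->
  forall s, In s (syllables w) -> In s (SylM N).
Proof.
  intros Hnz Halt HN s Hs.
  pose proof (syl_degree_in_concat _ _ Hs) as Hd. rewrite concat_syllables in Hd.
  destruct (syllables_shape w Hnz Halt s Hs) as [[g [k [-> Hk]]]|[g [e [d [-> He]]]]].
  - set (d := Z.to_nat (Z.abs k)).
    assert (Hdeg : syl_degree [(g, k)] = Z.abs k) by (unfold syl_degree; simpl; lia).
    apply (In_SylM N d); [lia|].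
    assert (Hd2 : (2 <=? d)%nat = true) by (apply Nat.leb_le; lia).
    assert (Hk' : k = Z.of_nat d \/ k = (- Z.of_nat d)%Z) by lia.
    unfold new_syl; rewrite Hd2. apply in_or_app; right.
    destruct Hk' as [Hk'|Hk']; rewrite Hk'; destruct g; simpl; repeat (first [left; reflexivity | right]).
  - rewrite syl_degree_run in Hd by auto.
    apply (In_SylM N (S d)); [lia|].
    unfold new_syl. apply in_or_app; left.
    destruct He as [-> | ->]; destruct g; simpl; repeat (first [left; reflexivity | right]).
Qed.

Theorem lemma1 :
  forall (Y : R), 0 < Y ->
  forall ws : list (list term),
    NoDup ws ->
    (forall w, In w ws -> reduced_word w /\ w <> nil /\ L_minus w <= Y) ->
    INR (length ws) <= exp (3 * Y) / 2.
Proof.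
  intros Y _ ws Hnd Hw.
  set (N := Nb ws).
  assert (Hincl : incl (map syllables ws) (Gn (SylM N) N)).
  { intros ss Hss. apply in_map_iff in Hss. destruct Hss as [w [<- Hin]].
    destruct (Hw w Hin) as [[Hnz Halt] [Hne _]].
    pose proof (Nb_ge ws w Hin) as HN. fold N in HN.
    pose proof (syl_in_SylM w N Hnz Halt HN) as Hsyl.
    pose proof (length_syllables w) as Hl.
    pose proof (length_le_degree w Hnz) as Hl2.
    pose proof (concat_syllables w) as Hc.
    destruct (syllables w) as [|s ss] eqn:E; [simpl in Hc; congruence|].
    apply In_Gn; auto. simpl in Hl. pose proof (Z2Nat.id (syl_degree w) (syl_degree_nonneg w)). unfold term in *. clearbody N. lia. }
  assert (Hnd' : NoDup (map syllables ws)) by (apply Injective_map_NoDup; auto; apply syllables_inj).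
  pose proof (sumR_nodup_incl phi _ _ phi_nonneg Hnd' Hincl) as H1.
  pose proof (sum_Gn (SylM N) N (SylM_le N)) as H2.
  rewrite sumR_map in H1.
  assert (H3 : INR (length ws) * exp (-3 * Y) <= sumR (fun w => phi (syllables w)) ws).
  { apply sumR_lower. intros w Hin. destruct (Hw w Hin) as [[Hnz Halt] [_ HL]].
    rewrite phi_exp.
    - apply Rlt_le_weak_compat || idtac.
      destruct (Rle_lt_or_eq_dec _ _ (Rmult_le_compat_l 3 _ _ ltac:(lra) HL)) as [Hlt|Heq].
      + left. apply exp_increasing. unfold L_minus in Hlt. lra.
      + right. f_equal. unfold L_minus in Heq. lra.
    - intros s Hs. apply shape_deg_pos. eapply syllables_shape; eauto. }
  assert (He : exp (3 * Y) * exp (-3 * Y) = 1).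
  { rewrite <- exp_plus. replace (3 * Y + -3 * Y) with 0 by ring. apply exp_0. }
  pose proof (exp_pos (3 * Y)). pose proof (exp_pos (-3 * Y)).
  assert (INR (length ws) * exp (-3 * Y) <= 1/2) by lra.
  replace (INR (length ws)) with (INR (length ws) * exp (-3 * Y) * exp (3 * Y)) by nra.
  nra.
Qed.
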